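(* Let $H$ be a graph such that $L(H)$ has a $K_t$-minor. Then for every integer $m\geq 2$, $L(mH)$ has a $K_{mt}$-minor.
   Context: Graphs are finite and may have parallel edges but no loops. $L(H)$ is the simple graph with vertex set $E(H)$ in which two distinct edges of $H$ are adjacent iff they share at least one endpoint. For $m\geq 2$, $mH$ denotes the graph obtained from $H$ by replacing each edge $e$ by $m$ parallel copies of $e$. A graph has a $K_t$-minor if $K_t$ can be obtained from a subgraph of it by contracting edges. *)

(* Defs.v *)
From mathcomp Require Import all_boot.
Set Implicit Arguments. Unset Strict Implicit. Unset Printing Implicit Defensive.

(* A finite multigraph H (parallel edges allowed, no loops) is given by a
   finite vertex type V, a finite edge type E and an endpoint map
   ends : E -> V * V with (ends e).1 != (ends e).2 for every edge e. *)

Definition incident (V E : finType) (ends : E -> V * V) (e : E) (v : V) : bool :=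
  (v == (ends e).1) || (v == (ends e).2).

Arguments incident {V E} ends e v.
Definition line_graph (V E : finType) (ends : E -> V * V) : rel E :=
  fun e f => (e != f) && [exists v, incident ends e v && incident ends f v].

(* mH: every edge e replaced by m parallel copies (e, i), i < m. *)

Definition mult_ends (m : nat) (V E : finType) (ends : E -> V * V)
  : E * 'I_m -> V * V := fun p => ends p.1.

Definition connected_in (T : finType) (r : rel T) (A : {set T}) : Prop :=
  forall x y, x \in A -> y \in A ->
    connect [rel u v | [&& r u v, u \in A & v \in A]] x y.

(* G has a K_t minor: there are t pairwise disjoint, nonempty, connected
   branch sets, pairwise joined by an edge (standard equivalent of "K_t is
   obtained from a subgraph by contracting edges"). *)
Definition has_K_minor (T : finType) (r : rel T) (t : nat) : Prop :=
  exists B : 'I_t -> {set T},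
    [/\ forall i, B i != set0,
        forall i, connected_in r (B i),
        forall i j, i != j -> [disjoint B i & B j]
      & forall i j, i != j -> exists x y, [/\ x \in B i, y \in B j & r x y]].

Arguments mult_ends m {V E} ends _.

(* Main.v *)
Require Import Defs.
From mathcomp Require Import all_boot.
Set Implicit Arguments. Unset Strict Implicit. Unset Printing Implicit Defensive.

Section Aux.
Variables (V E : finType) (ends : E -> V * V) (m : nat).

Lemma lift_adj (a b : E) (i j : 'I_m) :
  line_graph ends a b -> line_graph (mult_ends m ends) (a, i) (b, j).
Proof.
case/andP=> ab /existsP[v /andP[ha hb]]; apply/andP; split.
  by rewrite xpair_eqE negb_and ab.
by apply/existsP; exists v; rewrite /incident /mult_ends /= -!/(incident _ _ _) ha hb.
Qed.

Lemma lift_connect (A : {set E}) (i : 'I_m) a b :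
  connect [rel u v | [&& line_graph ends u v, u \in A & v \in A]] a b ->
  connect [rel u v | [&& line_graph (mult_ends m ends) u v,
     u \in [set x | (x.1 \in A) && (x.2 == i)] &
     v \in [set x | (x.1 \in A) && (x.2 == i)]]] (a, i) (b, i).
Proof.
move/connectP=> [s]; elim: s a => [|c s IH] a /=; first by move=> _ ->; exact: connect0.
case/andP=> /and3P[Rac Aa Ac] Ps Lc.
apply: connect_trans (connect1 _) (IH c Ps Lc).
by rewrite /= lift_adj // !inE /= Aa Ac !eqxx.
Qed.
End Aux.

Theorem mainTheorem12 (V E : finType) (ends : E -> V * V)
  (noloop : forall e, (ends e).1 != (ends e).2) (t : nat) :
  has_K_minor (line_graph ends) t ->
  forall m : nat, 2 <= m -> has_K_minor (line_graph (mult_ends m ends)) (m * t).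
Proof.
move=> [B [Bn Bc Bd Ba]] m m2.
have m0 : 0 < m by apply: leq_trans m2.
have kP (p : 'I_(m * t)) : p %/ m < t by rewrite ltn_divLR // [t * m]mulnC.
have iP (p : 'I_(m * t)) : p %% m < m by rewrite ltn_pmod.
pose k p := Ordinal (kP p).
pose ii p := Ordinal (iP p).
have kiP p q : k p = k q -> ii p = ii q -> p = q.
  move=> /(congr1 val) /= h1 /(congr1 val) /= h2; apply: val_inj => /=.
  by rewrite (divn_eq p m) (divn_eq q m) h1 h2.
exists (fun p => [set x | (x.1 \in B (k p)) && (x.2 == ii p)]); split.
- move=> p; case/set0Pn: (Bn (k p)) => x Hx.
  by apply/set0Pn; exists (x, ii p); rewrite inE Hx eqxx.
- move=> p [x a] [y b]; rewrite !inE /= => /andP[Hx /eqP->] /andP[Hy /eqP->].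
  exact: lift_connect (Bc _ _ _ Hx Hy).
- move=> p q pq; apply/pred0P => [[x a]] /=; rewrite !inE /=.
  apply/negbTE/negP => /andP[/andP[Hx /eqP Ea] /andP[Hy /eqP Eb]].
  have [E1|N1] := eqVneq (k p) (k q).
    by move/negP: pq; apply; apply/eqP; apply: kiP; rewrite // -Ea -Eb.
  by rewrite (disjointFr (Bd _ _ N1) Hx) in Hy.
- move=> p q pq.
  have [E1|N1] := eqVneq (k p) (k q).
    have N2 : ii p != ii q.
      by apply: contra pq => /eqP h; apply/eqP; apply: kiP.
    case/set0Pn: (Bn (k p)) => x Hx.
    exists (x, ii p), (x, ii q); rewrite !inE /= Hx -E1 Hx !eqxx; split => //.
    apply/andP; split; first by rewrite xpair_eqE negb_and N2 orbT.
    by apply/existsP; exists (ends x).1; rewrite /incident /mult_ends /= eqxx.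
  have [x [y [Hx Hy Hr]]] := Ba _ _ N1.
  exists (x, ii p), (y, ii q); rewrite !inE /= Hx Hy !eqxx; split => //.
  exact: lift_adj.
Qed.
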